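(* Let $K$ be a field with $\mathrm{char}(K) = 0$ or $\mathrm{char}(K) > n$. Let $f \in K[x_1,\dots,x_n]$ be a homogeneous polynomial of degree $d$ all of whose terms are square-free. If $f(1,1,\dots,1) \neq 0$ in $K$, then for every $N \ge n+d$, in the polynomial ring $K[x_1,\dots,x_N]$ one has $$(S_N.f) = (S_N.\,x_1x_2\cdots x_d).$$ Conversely, if $f(1,1,\dots,1) = 0$ in $K$, then for every $N \ge n$ the radical $\sqrt{(S_N.f)}\subseteq K[x_1,\dots,x_N]$ contains no monomial.
   Context: $S_N$ acts on $K[x_1,\dots,x_N]$ by $\sigma.x_i = x_{\sigma(i)}$; $f$ is viewed as an element of $K[x_1,\dots,x_N]$ for $N\ge n$; $(S_N.f)$ is the ideal generated by the orbit of $f$, and $(S_N.\,x_1\cdots x_d)$ is the ideal generated by all square-free monomials of degree $d$ in $x_1,\dots,x_N$. *)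

(* Defs.v *)
From HB Require Import structures.
From mathcomp Require Import all_boot all_order all_fingroup all_algebra.
From mathcomp Require Import mpoly.
Set Implicit Arguments. Unset Strict Implicit. Unset Printing Implicit Defensive.
Import GRing.Theory.
Local Open Scope ring_scope.

Definition ideal_gen (K : fieldType) (N : nat) (S : {mpoly K[N]} -> Prop)
  (p : {mpoly K[N]}) : Prop :=
  exists hs : seq ({mpoly K[N]} * {mpoly K[N]}),
    (forall hg, hg \in hs -> S hg.2) /\ p = \sum_(hg <- hs) hg.1 * hg.2.

Definition sym_orbit (K : fieldType) (N : nat) (g : {mpoly K[N]}) (q : {mpoly K[N]}) : Prop :=
  exists s : 'S_N, q = msym s g.

Definition orbit_ideal (K : fieldType) (N : nat) (g : {mpoly K[N]}) :=
  ideal_gen (sym_orbit g).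

(* the monomial x_1 x_2 ... x_d in K[x_1..x_N] (0-indexed variables 0..d-1) *)
Definition sqfree_prod (K : fieldType) (N d : nat) : {mpoly K[N]} :=
  \prod_(i < N | (i < d)%N) 'X_i.

Definition radical (K : fieldType) (N : nat) (I : {mpoly K[N]} -> Prop)
  (p : {mpoly K[N]}) : Prop := exists k : nat, I (p ^+ k).

(* Embedding K[x_1..x_n] -> K[x_1..x_N] sending x_i to x_i (for N >= n);
   variables with index >= N would be sent to 0, which never happens when n <= N. *)
Definition embed (K : fieldType) (n N : nat) (f : {mpoly K[n]}) : {mpoly K[N]} :=
  mmap (@mpolyC N K)
    (fun i : 'I_n => match @insub nat (fun k => (k < N)%N) 'I_N (val i) with
                     | Some j => 'X_j | None => 0 end) f.

Definition sqfree_terms (K : fieldType) (n : nat) (f : {mpoly K[n]}) : Prop :=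
  forall m : 'X_{1..n}, m \in msupp f -> forall i : 'I_n, (m i <= 1)%N.

(* Main.v *)
Require Import Defs.
From HB Require Import structures.
From mathcomp Require Import all_boot all_order all_fingroup all_algebra.
From mathcomp Require Import mpoly.
From mathcomp Require Import zify.
Import GRing.Theory.
Local Open Scope ring_scope.
Set Implicit Arguments. Unset Strict Implicit. Unset Printing Implicit Defensive.

Definition xs (K : fieldType) (N : nat) (S : {set 'I_N}) : {mpoly K[N]} :=
  \prod_(j in S) 'X_j.

Definition is_ideal (K : fieldType) (N : nat) (I : {mpoly K[N]} -> Prop) :=
  I 0 /\ (forall p q, I p -> I q -> I (p + q)) /\ (forall a p, I p -> I (a * p)).

Definition tstable (K : fieldType) (N : nat) (X : {set 'I_N}) (I : {mpoly K[N]} -> Prop) :=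
  forall u v : 'I_N, u \in X -> v \in X -> forall p, I p -> I (msym (tperm u v) p).

Definition Pc (K : fieldType) (N : nat) (c : {set 'I_N} -> K) : {mpoly K[N]} :=
  \sum_(S : {set 'I_N}) c S *: xs K S.

Lemma msymXi (K : fieldType) N (s : 'S_N) (i : 'I_N) :
  msym s ('X_i : {mpoly K[N]}) = 'X_(s i).
Proof. by rewrite /msym mmapX mmap1U. Qed.

Lemma msym_xs (K : fieldType) N (s : 'S_N) (S : {set 'I_N}) :
  msym s (xs K S) = xs K (s @: S).
Proof.
rewrite /xs rmorph_prod big_imset /=; last by move=> x y _ _; apply: perm_inj.
by apply: eq_bigr => i _; rewrite msymXi.
Qed.


Lemma idealZ (K : fieldType) N (I : {mpoly K[N]} -> Prop) c p : is_ideal I -> I p -> I (c *: p).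
Proof. by move=> [_ [_ H]] Hp; rewrite -mul_mpolyC; apply: H. Qed.

Lemma idealD (K : fieldType) N (I : {mpoly K[N]} -> Prop) p q : is_ideal I -> I p -> I q -> I (p + q).
Proof. by move=> [_ [H _]]; apply: H. Qed.

Lemma idealM (K : fieldType) N (I : {mpoly K[N]} -> Prop) a p : is_ideal I -> I p -> I (a * p).
Proof. by move=> [_ [_ H]]; apply: H. Qed.

Lemma ideal0 (K : fieldType) N (I : {mpoly K[N]} -> Prop) : is_ideal I -> I 0.
Proof. by case. Qed.

Lemma idealN (K : fieldType) N (I : {mpoly K[N]} -> Prop) p : is_ideal I -> I p -> I (- p).
Proof. by move=> hI Hp; rewrite -scaleN1r; apply: idealZ. Qed.

Lemma idealB (K : fieldType) N (I : {mpoly K[N]} -> Prop) p q : is_ideal I -> I p -> I q -> I (p - q).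
Proof. by move=> hI Hp Hq; apply: idealD => //; apply: idealN. Qed.

Lemma ideal_sum (K : fieldType) N (I : {mpoly K[N]} -> Prop) (T : Type) (r : seq T) (P : pred T) F :
  is_ideal I -> (forall x, P x -> I (F x)) -> I (\sum_(x <- r | P x) F x).
Proof.
move=> hI H; elim/big_rec: _ => [|x y Px Iy]; first exact: ideal0.
by apply: idealD => //; apply: H.
Qed.

Lemma ideal_colon (K : fieldType) N (I : {mpoly K[N]} -> Prop) q : is_ideal I -> is_ideal (fun p => I (q * p)).
Proof.
move=> hI; split; first by rewrite mulr0; apply: ideal0.
split=> [p r Hp Hr|a p Hp]; first by rewrite mulrDr; apply: idealD.
by rewrite mulrCA; apply: idealM.
Qed.

Lemma finish (K : fieldType) N d (X A : {set 'I_N}) (I : {mpoly K[N]} -> Prop) (c : {set 'I_N} -> K) :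
  is_ideal I -> A \subset X ->
  (forall S T : {set 'I_N}, S \subset X -> T \subset X -> #|S| = d -> #|T| = d -> I (xs K S - xs K T)) ->
  (forall S, c S != 0 -> S \subset A /\ #|S| = d) ->
  \sum_S c S != 0 -> I (Pc c) ->
  forall T : {set 'I_N}, T \subset X -> #|T| = d -> I (xs K T).
Proof.
move=> hI sAX hex hc hs hP T sTX cT.
have H1 : I (Pc c - (\sum_S c S) *: xs K T).
  rewrite /Pc scaler_suml -sumrB; apply: ideal_sum => // S _.
  rewrite -scalerBr; case: (eqVneq (c S) 0) => [->|/hc [sSA cS]].
    by rewrite scale0r; apply: ideal0.
  apply: idealZ => //; apply: hex => //; exact: subset_trans sSA sAX.
have H2 : I ((\sum_S c S) *: xs K T).
  have -> : (\sum_S c S) *: xs K T = Pc c - (Pc c - (\sum_S c S) *: xs K T).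
    by rewrite opprB addrC subrK.
  by apply: idealB.
have -> : xs K T = (\sum_S c S)^-1 *: ((\sum_S c S) *: xs K T).
  by rewrite scalerA mulVf // scale1r.
by apply: idealZ.
Qed.

Lemma exchange (K : fieldType) N d (X : {set 'I_N}) (I : {mpoly K[N]} -> Prop) :
  is_ideal I ->
  (forall u v (R : {set 'I_N}), u \in X -> v \in X -> u != v -> R \subset X ->
     u \notin R -> v \notin R -> #|R| = d -> I (('X_u - 'X_v) * xs K R)) ->
  forall S T : {set 'I_N}, S \subset X -> T \subset X -> #|S| = d.+1 -> #|T| = d.+1 ->
    I (xs K S - xs K T).
Proof.
move=> hI hR S T sSX sTX cS cT.
move Hk: #|S :\: T| => k; elim: k S sSX cS Hk => [|k IH] S sSX cS Hk.
  have sST : S \subset T by rewrite -setD_eq0 -cards_eq0 Hk.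
  have eST : S = T by apply/eqP; rewrite eqEcard sST cS cT leqnn.
  by rewrite eST subrr; apply: ideal0.
have [u] : exists u, u \in S :\: T by apply/set0Pn; rewrite -card_gt0 Hk.
rewrite inE => /andP [uT uS].
have [v] : exists v, v \in T :\: S.
  apply/set0Pn; rewrite -card_gt0 cardsD setIC cT -cS -cardsD Hk //.
rewrite inE => /andP [vS vT].
have uv : u != v by apply: contraNneq vS => <-.
pose R := S :\ u.
have vR : v \notin R by rewrite !inE negb_and vS orbT.
have uR : u \notin R by rewrite !inE eqxx.
have sRX : R \subset X by apply: subset_trans (subD1set S u) sSX.
have cR : #|R| = d.
  by have := cardsD1 u S; rewrite uS cS add1n => /eqP; rewrite eqSS => /eqP ->.
have eS : xs K S = 'X_u * xs K R by rewrite /xs (big_setD1 u uS).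
have eS2 : xs K (v |: R) = 'X_v * xs K R by rewrite /xs big_setU1.
have -> : xs K S - xs K T = (xs K S - xs K (v |: R)) + (xs K (v |: R) - xs K T).
  by rewrite addrA subrK.
apply: idealD => //.
  rewrite eS eS2 -mulrBl; apply: hR => //; [exact: (subsetP sSX)|exact: (subsetP sTX)].
apply: IH.
- by rewrite subUset sub1set (subsetP sTX) // sRX.
- by rewrite cardsU1 vR cR.
have -> : (v |: R) :\: T = (S :\: T) :\ u.
  apply/setP=> x; rewrite !inE; case: (eqVneq x v) => [->|_]; first by rewrite vT !andbF.
  by rewrite /= andbCA.
have := cardsD1 u (S :\: T); rewrite Hk inE uT uS add1n.
by move/eqP; rewrite eqSS => /eqP ->.
Qed.

Lemma mem_imset_tperm N (a b x : 'I_N) (S : {set 'I_N}) :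
  (x \in tperm a b @: S) = (tperm a b x \in S).
Proof. by rewrite -{1}(tpermK a b x) mem_imset //; apply: perm_inj. Qed.

Lemma tperm_mem N (X : {set 'I_N}) (a b x : 'I_N) :
  a \in X -> b \in X -> (tperm a b x \in X) = (x \in X).
Proof.
move=> aX bX; case: tpermP => [->|->|//]; by rewrite ?aX ?bX.
Qed.

Lemma transport (K : fieldType) N d (X : {set 'I_N}) (I : {mpoly K[N]} -> Prop) (i y : 'I_N) :
  is_ideal I -> tstable X I -> i \in X -> y \in X -> i != y ->
  (forall R : {set 'I_N}, R \subset X :\ i :\ y -> #|R| = d -> I (('X_i - 'X_y) * xs K R)) ->
  forall u v (R : {set 'I_N}), u \in X -> v \in X -> u != v -> R \subset X ->
     u \notin R -> v \notin R -> #|R| = d -> I (('X_u - 'X_v) * xs K R).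
Proof.
move=> hI hS iX yX iy hR u v R uX vX uv sRX uR vR cR.
pose t1 := tperm i u; pose w := t1 y; pose t2 := tperm w v.
have wX : w \in X by rewrite /w tperm_mem.
have wu : w != u.
  apply: (contraNneq _ iy) => e; apply/eqP; apply: (@perm_inj _ t1).
  by rewrite [t1 i]tpermL -e.
have t2u : t2 u = u by rewrite /t2 tpermD // eq_sym.
pose R0 := t1 @: (t2 @: R).
have memR0 x : (x \in R0) = (t2 (t1 x) \in R) by rewrite !mem_imset_tperm.
have sR0 : R0 \subset X :\ i :\ y.
  apply/subsetP=> x; rewrite memR0 !inE => xR.
  have := subsetP sRX _ xR; rewrite /t2 tperm_mem // /t1 tperm_mem // => ->.
  rewrite andbT; apply/andP; split.
    by apply: (contraNneq _ vR) => e; rewrite -(tpermL w v) -/t2 -/w /w -e.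
  by apply: (contraNneq _ uR) => e; rewrite -t2u -(tpermL i u) -/t1 -e.
have cR0 : #|R0| = d by rewrite !card_imset //; apply: perm_inj.
have H := hR R0 sR0 cR0.
have H2 := hS w v wX vX _ (hS i u iX uX _ H).
suff <- : msym t2 (msym t1 (('X_i - 'X_y) * xs K R0)) = ('X_u - 'X_v) * xs K R by [].
rewrite !msymM !msymB !msymXi !msym_xs -/t1 -/t2 /t1 tpermL -/t1 -/w -/t2 t2u /t2 tpermL.
congr (_ * xs K _); apply/setP=> x.
by rewrite !mem_imset_tperm !tpermK.
Qed.

Lemma diff_identity (K : fieldType) N (c : {set 'I_N} -> K) (i y : 'I_N) :
  i != y -> (forall S, c S != 0 -> y \notin S) ->
  Pc c - msym (tperm i y) (Pc c) =
  ('X_i - 'X_y) * Pc (fun R => if i \in R then 0 else c (i |: R)).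
Proof.
move=> iy hc.
pose G (S : {set 'I_N}) := c S *: (('X_i - 'X_y) * xs K (S :\ i)).
have E1 : Pc c - msym (tperm i y) (Pc c) = \sum_(S : {set 'I_N} | i \in S) G S.
  rewrite /Pc (raddf_sum (msym (tperm i y))) -sumrB [RHS]big_mkcond /=; apply: eq_bigr => S _.
  rewrite msymZ -scalerBr /G.
  case: (eqVneq (c S) 0) => [->|/hc yS]; first by rewrite !scale0r if_same.
  rewrite /xs rmorph_prod /=.
  case: ifP => iS.
    rewrite (big_setD1 i iS) [in X in _ - X](big_setD1 i iS) /= msymXi tpermL.
    congr (_ *: _); rewrite mulrBl; congr (_ - _ * _); apply: eq_bigr => j.
    rewrite !inE => /andP [ji jS]; rewrite msymXi tpermD // eq_sym //.
    by apply: (contraNneq _ yS) => <-.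
  rewrite [X in _ - X](eq_bigr (fun j => 'X_j)); first by rewrite subrr scaler0.
  move=> j jS.
  rewrite msymXi tpermD //; first by apply: (contraNneq _ (negbT iS)) => ->.
  by apply: (contraNneq _ yS) => ->.
rewrite E1 (reindex_onto (fun R => i |: R) (fun S => S :\ i)) /=; last first.
  by move=> S iS; rewrite setD1K.
rewrite /Pc mulr_sumr big_mkcond /=; apply: eq_bigr => R _.
rewrite setU11 /=; case: ifP => [/eqP e|ne].
  have iR : i \notin R by rewrite -e setD11.
  by rewrite (negbTE iR) /G e scalerAr.
case: ifP => iR; first by rewrite scale0r mulr0.
by rewrite setU1K ?iR ?eqxx in ne.
Qed.

Lemma sum_count (K : fieldType) N d (A : {set 'I_N}) (c : {set 'I_N} -> K) :
  (forall S, c S != 0 -> S \subset A /\ #|S| = d) ->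
  \sum_(i in A) \sum_(S : {set 'I_N} | i \in S) c S = d%:R * \sum_S c S.
Proof.
move=> hc.
rewrite (eq_bigr (fun i => \sum_(S : {set 'I_N}) (if i \in S then c S else 0))); last first.
  by move=> i _; rewrite big_mkcond.
rewrite exchange_big mulr_sumr; apply: eq_bigr => S _.
case: (eqVneq (c S) 0) => [->|/hc [sSA cS]].
  by rewrite mulr0; apply: big1 => i _; rewrite if_same.
rewrite -big_mkcondr /= (eq_bigl (fun i => i \in S)); last first.
  by move=> i; rewrite andbC; case iS: (i \in S) => //=; rewrite (subsetP sSA).
by rewrite sumr_const cS mulr_natl.
Qed.

Lemma sum_h (K : fieldType) N (c : {set 'I_N} -> K) (i : 'I_N) :
  \sum_(R : {set 'I_N}) (if i \in R then 0 else c (i |: R)) = \sum_(S : {set 'I_N} | i \in S) c S.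
Proof.
rewrite [RHS](reindex_onto (fun R => i |: R) (fun S => S :\ i)) /=; last first.
  by move=> S iS; rewrite setD1K.
rewrite [RHS]big_mkcond /=; apply: eq_bigr => R _.
rewrite setU11 /=; case: ifP => iR.
  case: eqP => // e; by move: iR; rewrite -e setD11.
by rewrite setU1K ?iR ?eqxx.
Qed.

Lemma colon_tstable (K : fieldType) N (X : {set 'I_N}) (I : {mpoly K[N]} -> Prop) (i y : 'I_N) :
  tstable X I -> tstable (X :\ i :\ y) (fun p => I (('X_i - 'X_y) * p)).
Proof.
move=> hS u v; rewrite !inE => /andP [uy /andP [ui uX]] /andP [vy /andP [vi vX]] p Hp.
have := hS u v uX vX _ Hp; rewrite msymM msymB !msymXi !tpermD // eq_sym //.
Qed.

Lemma main (K : fieldType) N d : forall (X A : {set 'I_N}) (I : {mpoly K[N]} -> Prop)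
  (c : {set 'I_N} -> K),
  A \subset X -> (#|A| + d <= #|X|)%N ->
  (forall k, (0 < k <= #|A|)%N -> k%:R != 0 :> K) ->
  is_ideal I -> tstable X I ->
  (forall S, c S != 0 -> S \subset A /\ #|S| = d) ->
  \sum_S c S != 0 -> I (Pc c) ->
  forall T : {set 'I_N}, T \subset X -> #|T| = d -> I (xs K T).
Proof.
elim: d => [|d IH] X A I c sAX cAX hch hI hS hc hs hP.
  apply: (finish hI sAX _ hc hs hP) => S T _ _ /eqP; rewrite cards_eq0 => /eqP ->.
  by move/eqP; rewrite cards_eq0 => /eqP ->; rewrite subrr; apply: ideal0.
apply: (finish hI sAX _ hc hs hP).
have [S0 cS0] : exists S, c S != 0.
  apply/existsP; apply: contraNT hs => /existsPn H.
  by rewrite big1 // => S _; apply/eqP; apply: negbNE.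
have dA : (d.+1 <= #|A|)%N.
  by have [sS0A <-] := hc S0 cS0; apply: subset_leq_card.
have [i iA hi] : exists2 i, i \in A & \sum_(S : {set 'I_N} | i \in S) c S != 0.
  case: (pickP (fun i => (i \in A) && (\sum_(S : {set 'I_N} | i \in S) c S != 0))).
    by move=> i /andP [iA hi]; exists i.
  move=> none; have : (d.+1)%:R * \sum_S c S = 0.
    rewrite -(sum_count hc); apply: big1 => i iA.
    by move: (none i); rewrite iA /= => /negbFE/eqP.
  by move/eqP; rewrite mulf_eq0 (negbTE hs) orbF (negbTE (hch d.+1 dA)).
have [y] : exists y, y \in X :\: A.
  apply/set0Pn; rewrite -card_gt0 cardsD (setIidPr sAX); lia.
rewrite inE => /andP [yA yX].
have iX : i \in X by apply: (subsetP sAX).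
have iy : i != y by apply/eqP => e; move: yA; rewrite -e iA.
pose h := fun R : {set 'I_N} => if i \in R then 0 else c (i |: R).
pose J := fun p => I (('X_i - 'X_y) * p).
have hJ : is_ideal J by apply: ideal_colon.
have JP : J (Pc h).
  rewrite /J -diff_identity //; last first.
    move=> S /hc [sSA _]; apply: contraNN yA; exact: (subsetP sSA).
  by apply: idealB => //; apply: hS.
have cA1 : #|A| = #|A :\ i|.+1 by rewrite (cardsD1 i A) iA.
have cX1 : #|X| = #|X :\ i|.+1 by rewrite (cardsD1 i X) iX.
have cX2 := cardsD1 y (X :\ i); rewrite !inE yX eq_sym iy /= in cX2.
have IH' := IH (X :\ i :\ y) (A :\ i) J h.
have key : forall R : {set 'I_N}, R \subset X :\ i :\ y -> #|R| = d -> J (xs K R).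
  apply: IH' => //.
  - apply/subsetP=> x; rewrite !inE => /andP [xi xA]; rewrite xi (subsetP sAX) //.
    apply/andP; split => //; apply/eqP => e; move: yA; by rewrite -e xA.
  - move: cAX cA1 cX1 cX2. set a := #|A :\ i|. set x1 := #|X :\ i|. set x2 := #|X :\ i :\ y|. move=> H1 H2 H3 H4. clearbody a x1 x2. lia.
  - by move=> k /andP [k0 kA]; apply: hch; rewrite k0 /= cA1 (leqW kA).
  - by apply: colon_tstable.
  - move=> R; rewrite /h; case: ifP => iR cne; first by rewrite eqxx in cne.
    have [sA cR] := hc _ cne; split.
      apply/subsetP=> x xR; rewrite !inE (subsetP sA) ?andbT; last by rewrite !inE xR orbT.
      by apply/eqP => e; move: iR; rewrite -e xR.
    by move: cR; rewrite cardsU1 iR add1n => -[].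
  - by rewrite /h sum_h.
apply: exchange => //.
by apply: (transport hI hS iX yX iy).
Qed.

Lemma orbit_is_ideal (K : fieldType) N (g : {mpoly K[N]}) : is_ideal (orbit_ideal g).
Proof.
split; first by exists [::]; rewrite big_nil.
split.
  move=> p q [hs1 [H1 ->]] [hs2 [H2 ->]]; exists (hs1 ++ hs2); split; last by rewrite big_cat.
  by move=> hg; rewrite mem_cat => /orP [/H1|/H2].
move=> a p [hs [H ->]]; exists [seq (a * hg.1, hg.2) | hg <- hs]; split.
  by move=> hg /mapP [hg' /H Hg' ->].
by rewrite big_map mulr_sumr; apply: eq_bigr => hg _; rewrite mulrA.
Qed.

Lemma orbit_msym (K : fieldType) N (g : {mpoly K[N]}) (s : 'S_N) p :
  orbit_ideal g p -> orbit_ideal g (msym s p).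
Proof.
move=> [hs [H ->]]; exists [seq (msym s hg.1, msym s hg.2) | hg <- hs]; split.
  move=> hg /mapP [hg' /H [t ->] ->] /=; exists (t * s)%g; by rewrite msymMm.
by rewrite (raddf_sum (msym s)) big_map; apply: eq_bigr => hg _; rewrite /= msymM.
Qed.

Lemma orbit_gen (K : fieldType) N (g : {mpoly K[N]}) (s : 'S_N) :
  orbit_ideal g (msym s g).
Proof.
exists [:: (1, msym s g)]; split; last by rewrite big_seq1 mul1r.
by move=> hg; rewrite inE => /eqP -> /=; exists s.
Qed.

Lemma orbit_sub (K : fieldType) N (g : {mpoly K[N]}) (I : {mpoly K[N]} -> Prop) p :
  is_ideal I -> (forall s : 'S_N, I (msym s g)) -> orbit_ideal g p -> I p.
Proof.
move=> hI Hg [hs [H ->]]; rewrite big_seq; apply: ideal_sum => // hg /H [s ->].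
by apply: idealM.
Qed.

Lemma mono (K : fieldType) N (I : {mpoly K[N]} -> Prop) (T0 : {set 'I_N}) :
  is_ideal I -> (forall (s : 'S_N) p, I p -> I (msym s p)) -> I (xs K T0) ->
  forall T : {set 'I_N}, #|T| = #|T0| -> I (xs K T).
Proof.
move=> hI hS H0 T cT.
move Hk: #|T :\: T0| => k; elim: k T cT Hk => [|k IH] T cT Hk.
  have sST : T \subset T0 by rewrite -setD_eq0 -cards_eq0 Hk.
  have eST : T = T0 by apply/eqP; rewrite eqEcard sST cT leqnn.
  by rewrite eST.
have [u] : exists u, u \in T :\: T0 by apply/set0Pn; rewrite -card_gt0 Hk.
rewrite inE => /andP [uT uS].
have [v] : exists v, v \in T0 :\: T.
  by apply/set0Pn; rewrite -card_gt0 cardsD setIC -cT -cardsD Hk.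
rewrite inE => /andP [vS vT].
have uv : u != v by apply/eqP => e; move: vS; rewrite -e uS.
pose T2 := tperm u v @: T.
have -> : T = tperm u v @: T2 by apply/setP => x; rewrite !mem_imset_tperm tpermK.
rewrite -msym_xs; apply: hS; apply: IH.
  by rewrite card_imset //; apply: perm_inj.
have -> : T2 :\: T0 = (T :\: T0) :\ u.
  apply/setP=> x; rewrite !inE mem_imset_tperm.
  case: tpermP => [->|->|xu xv]; first by rewrite eqxx (negbTE vS) andbF.
    by rewrite vT /= andbF.
  by case: eqP => // e; case: xu.
have := cardsD1 u (T :\: T0); rewrite Hk inE uT uS add1n.
by move/eqP; rewrite eqSS => /eqP ->.
Qed.

Lemma char_ok (K : fieldType) (n : nat) :
  ([pchar K] =i pred0 \/ (forall p : nat, p \in [pchar K] -> (n < p)%N)) ->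
  forall k, (0 < k <= n)%N -> k%:R != 0 :> K.
Proof.
move=> hc k /andP [k0 kn]; apply/negP => /eqP/eqP kz.
have [p pc] := natf0_pchar k0 kz.
have pk : (p %| k)%N by rewrite (dvdn_pcharf pc).
have := dvdn_leq k0 pk; case: hc => [h|h]; first by move: pc; rewrite h.
by move: (h p pc) => np pk'; have := leq_trans np (leq_trans pk' kn); rewrite ltnn.
Qed.

Lemma widen_ord_inj n N (H : (n <= N)%N) : injective (widen_ord H).
Proof. by move=> x y /(congr1 val) /= /val_inj. Qed.

Definition Sm n N (H : (n <= N)%N) (m : 'X_{1..n}) : {set 'I_N} :=
  widen_ord H @: [set i | m i != 0%N].

Lemma embed_eq (K : fieldType) n N (H : (n <= N)%N) (f : {mpoly K[n]}) :
  sqfree_terms f ->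
  embed N f = \sum_(m <- msupp f) f@_m *: xs K (Sm H m).
Proof.
move=> hsq; rewrite /embed /mmap; apply: eq_big_seq => m mf.
rewrite mul_mpolyC; congr (_ *: _).
rewrite (@mmap1_eq _ _ _ (fun i => 'X_(widen_ord H i))); last first.
  move=> i /=; case: insubP => [j _ ej|]; first by rewrite (_ : j = widen_ord H i) //; apply: val_inj; rewrite ej.
  by rewrite (leq_trans (ltn_ord i) H).
rewrite /mmap1 /xs /Sm big_imset /=; last by move=> x y _ _; apply: (@widen_ord_inj _ _ H).
rewrite [RHS]big_mkcond /=; apply: eq_bigr => i _; rewrite inE.
by have := hsq m mf i; case: (m i) => [|[|k]] //= _; rewrite ?expr0 ?expr1.
Qed.

Definition cf (K : fieldType) n N (H : (n <= N)%N) (f : {mpoly K[n]}) (S : {set 'I_N}) : K :=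
  \sum_(m <- msupp f | Sm H m == S) f@_m.

Lemma embed_Pc (K : fieldType) n N (H : (n <= N)%N) (f : {mpoly K[n]}) :
  sqfree_terms f -> embed N f = Pc (cf H f).
Proof.
move=> hsq; rewrite embed_eq // /Pc /cf.
rewrite (eq_bigr (fun S => \sum_(m <- msupp f) (if Sm H m == S then f@_m *: xs K S else 0))); last first.
  move=> S _; rewrite scaler_suml big_mkcond /=; apply: eq_bigr => m _.
  by case: ifP => //; rewrite scale0r.
rewrite exchange_big /=; apply: eq_bigr => m _.
rewrite -big_mkcond /= (big_pred1 (Sm H m)) // => S /=; exact: eq_sym.
Qed.

Lemma sum_cf (K : fieldType) n N (H : (n <= N)%N) (f : {mpoly K[n]}) :
  \sum_S cf H f S = meval (fun _ => 1) f.
Proof.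
rewrite mevalE /cf.
rewrite (eq_bigr (fun S => \sum_(m <- msupp f) (if Sm H m == S then f@_m else 0))); last first.
  by move=> S _; rewrite big_mkcond.
rewrite exchange_big /=; apply: eq_bigr => m _.
rewrite -big_mkcond /= (big_pred1 (Sm H m)) => [|S /=]; last exact: eq_sym.
by rewrite big1 ?mulr1 // => i _; rewrite expr1n.
Qed.

Lemma cf_supp (K : fieldType) n N d (H : (n <= N)%N) (f : {mpoly K[n]}) :
  sqfree_terms f -> f \is d.-homog ->
  forall S, cf H f S != 0 -> S \subset widen_ord H @: [set: 'I_n] /\ #|S| = d.
Proof.
move=> hsq hom S; rewrite /cf.
case: (boolP (has (fun m => Sm H m == S) (msupp f))) => [/hasP [m mf /eqP <-] _| hn]; last first.
  rewrite big_seq_cond big1 ?eqxx // => m /andP [mf e].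
  by move/hasPn: hn => /(_ m mf); rewrite e.
split; first by apply: imsetS; apply: subsetT.
rewrite card_imset; last by apply: (@widen_ord_inj _ _ H).
have <- : mdeg m = d by move/dhomogP: hom => /(_ m mf).
rewrite mdegE -sum1_card big_mkcond /=; apply: eq_bigr => i _; rewrite inE.
by have := hsq m mf i; case: (m i) => [|[|k]].
Qed.

Lemma prod1 (K : fieldType) N (m' : 'X_{1..N}) : \prod_(i < N) (1 : K) ^+ m' i = 1.
Proof. by apply: big1 => i _; rewrite expr1n. Qed.

Lemma meval_xs1 (K : fieldType) N (S : {set 'I_N}) : meval (fun _ => 1) (xs K S) = 1.
Proof. by rewrite /xs rmorph_prod /=; apply: big1 => i _; rewrite mevalXU. Qed.

Lemma meval_msym1 (K : fieldType) N (s : 'S_N) (q : {mpoly K[N]}) :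
  meval (fun _ => 1) (msym s q) = meval (fun _ => 1) q.
Proof.
transitivity (meval (fun _ => 1) (msym s (\sum_(m <- msupp q) q@_m *: 'X_[m]))).
  by rewrite -mpolyE.
rewrite (big_morph _ (msymD s) (msym0 K s)) (big_morph _ (mevalD (fun _ => 1)) (meval0 _)) [RHS]mevalE.
by apply: eq_bigr => m _; rewrite msymZ msymX mevalZ mevalX !prod1.
Qed.

Lemma meval_Pc (K : fieldType) N (c : {set 'I_N} -> K) :
  meval (fun _ => 1) (Pc c) = \sum_S c S.
Proof.
rewrite /Pc (big_morph _ (mevalD (fun _ => 1)) (meval0 _)); apply: eq_bigr => S _.
by rewrite mevalZ meval_xs1 mulr1.
Qed.

Lemma card_lt N d : (d <= N)%N -> #|[set i : 'I_N | (i < d)%N]| = d.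
Proof.
move=> H; have -> : [set i : 'I_N | (i < d)%N] = widen_ord H @: [set: 'I_d].
  apply/setP=> x; rewrite inE; apply/idP/imsetP => [xd|[y _ ->]]; last exact: (ltn_ord y).
  by exists (Ordinal xd) => //; apply: val_inj.
by rewrite card_imset ?cardsT ?card_ord //; apply: widen_ord_inj.
Qed.

Theorem theorem1p7 (K : fieldType) (n d : nat) (f : {mpoly K[n]}) :
  ([pchar K] =i pred0 \/ (forall p : nat, p \in [pchar K] -> (n < p)%N)) ->
  f \is d.-homog ->
  sqfree_terms f ->
  (meval (fun _ => 1) f != 0 ->
     forall N : nat, (n + d <= N)%N ->
       forall p : {mpoly K[N]},
         orbit_ideal (embed N f) p <-> orbit_ideal (sqfree_prod K N d) p)
  /\
  (meval (fun _ => 1) f = 0 ->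
     forall N : nat, (n <= N)%N ->
       forall m : 'X_{1..N}, ~ radical (orbit_ideal (embed N f)) 'X_[m]).
Proof.
move=> hch hom hsq; split.
  move=> hf N hN p.
  have H : (n <= N)%N by apply: leq_trans hN; apply: leq_addr.
  have ef := embed_Pc H hsq.
  pose T0 := [set i : 'I_N | (i < d)%N].
  have cT0 : #|T0| = d by apply: card_lt; apply: leq_trans hN; apply: leq_addl.
  have e0 : sqfree_prod K N d = xs K T0.
    by rewrite /sqfree_prod /xs; apply: eq_bigl => i; rewrite inE.
  have hId := orbit_is_ideal (embed N f).
  have hIs := orbit_is_ideal (sqfree_prod K N d).
  have cA : #|widen_ord H @: [set: 'I_n]| = n.
    by rewrite card_imset ?cardsT ?card_ord //; apply: widen_ord_inj.
  have allI : forall T : {set 'I_N}, #|T| = d -> orbit_ideal (embed N f) (xs K T).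
    move=> T cT.
    apply: (@main K N d [set: 'I_N] (widen_ord H @: [set: 'I_n]) _ (cf H f)) => //.
    - by rewrite cA cardsT card_ord.
    - by rewrite cA; apply: char_ok.
    - by move=> u v _ _ q; apply: orbit_msym.
    - exact: cf_supp.
    - by rewrite sum_cf.
    - by rewrite -ef; have := orbit_gen (embed N f) 1; rewrite msym1m.
  have allJ : forall T : {set 'I_N}, #|T| = d -> orbit_ideal (sqfree_prod K N d) (xs K T).
    move=> T cT; apply: (@mono K N _ T0) => //.
    - by move=> s q; apply: orbit_msym.
    - by rewrite -e0; have := orbit_gen (sqfree_prod K N d) 1; rewrite msym1m.
    - by rewrite cT cT0.
  split.
    apply: orbit_sub => // s; rewrite ef /Pc (big_morph _ (msymD s) (msym0 K s)).
    apply: ideal_sum => // S _; rewrite msymZ msym_xs.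
    case: (eqVneq (cf H f S) 0) => [->|/(cf_supp hsq hom) [_ cS]].
      by rewrite scale0r; apply: ideal0.
    by apply: idealZ => //; apply: allJ; rewrite card_imset //; apply: perm_inj.
  apply: orbit_sub => // s; rewrite e0 msym_xs; apply: allI.
  by rewrite card_imset ?cT0 //; apply: perm_inj.
move=> hf N H m [k Hk].
have hE : is_ideal (fun q : {mpoly K[N]} => meval (fun _ => 1) q = 0).
  split; first exact: meval0.
  split=> [p q /= hp hq|a p /= hp]; first by rewrite mevalD hp hq addr0.
  by rewrite mevalM hp mulr0.
have hg : forall s : 'S_N, meval (fun _ => 1) (msym s (embed N f)) = 0.
  by move=> s; rewrite meval_msym1 (embed_Pc H hsq) meval_Pc sum_cf.
have := orbit_sub hE hg Hk => /=.
by rewrite mpolyXn mevalX prod1 => /eqP; rewrite oner_eq0.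
Qed.
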